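(* Let $\mathcal{F}$ satisfy the standard conditions. Then the set $\mathbb{R}_{\mathcal{F}}$ of $\mathcal{F}$-computable real numbers is a subfield of $\mathbb{R}$.
   Context: $\mathbb{N}=\{0,1,2,\dots\}$. $\mathcal{F}$ is a set of functions $\mathbb{N}^n\to\mathbb{N}$; it satisfies the standard conditions if it contains the zero function, the successor, all projections $P^n_i$, addition, multiplication and modified subtraction $x\dot- y=\max(x-y,0)$, and is closed under composition. An $\mathcal{F}$-sequence is $A:\mathbb{N}\to\mathbb{Q}$, $A(x)=\frac{f(x)-g(x)}{h(x)+1}$, with $f,g,h:\mathbb{N}\to\mathbb{N}$ in $\mathcal{F}$. A real number $\alpha$ is $\mathcal{F}$-computable if there is an $\mathcal{F}$-sequence $A$ with $|A(x)-\alpha|\le\frac1{x+1}$ for all $x$. *)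

(* Defs.v *)
From HB Require Import structures.
From mathcomp Require Import all_boot all_order all_algebra.
From mathcomp Require Import reals.
Set Implicit Arguments. Unset Strict Implicit. Unset Printing Implicit Defensive.
Import Order.TTheory GRing.Theory Num.Theory.

Definition fclass := forall n : nat, (n.-tuple nat -> nat) -> Prop.

Definition un (f : nat -> nat) : 1.-tuple nat -> nat := fun x => f (tnth x ord0).
Definition bin (f : nat -> nat -> nat) : 2.-tuple nat -> nat :=
  fun x => f (tnth x ord0) (tnth x ord_max).

Definition fcomp (m n : nat) (f : m.-tuple nat -> nat)
  (g : 'I_m -> n.-tuple nat -> nat) : n.-tuple nat -> nat :=
  fun x => f [tuple g i x | i < m].

Definition standard_conditions (F : fclass) : Prop :=
  [/\ F 1 (un (fun _ => 0%N)),
      F 1 (un S),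
      (forall n (i : 'I_n), F n (fun x => tnth x i)),
      [/\ F 2 (bin addn), F 2 (bin muln) & F 2 (bin subn)]
    & (forall m n (f : m.-tuple nat -> nat) (g : 'I_m -> n.-tuple nat -> nat),
         F m f -> (forall i, F n (g i)) -> F n (fcomp f g))].

Definition ev1 (f : 1.-tuple nat -> nat) (x : nat) : nat := f [tuple x].

Local Open Scope ring_scope.

Definition Fseq (R : realType) (f g h : 1.-tuple nat -> nat) (x : nat) : R :=
  ((ev1 f x)%:R - (ev1 g x)%:R) / ((ev1 h x).+1)%:R.

Definition F_computable (F : fclass) (R : realType) (alpha : R) : Prop :=
  exists f g h : 1.-tuple nat -> nat,
    [/\ F 1 f, F 1 g, F 1 h &
        forall x : nat, `|Fseq R f g h x - alpha| <= (x.+1%:R)^-1].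

Definition is_subfield (K : fieldType) (S : K -> Prop) : Prop :=
  [/\ S 0, S 1,
      (forall a b, S a -> S b -> S (a - b)),
      (forall a b, S a -> S b -> S (a * b))
    & (forall a, S a -> a != 0 -> S a^-1)].

(* Main.v *)
Require Import Defs.
From mathcomp Require Import all_boot all_order all_algebra.
From mathcomp Require Import reals zify ring lra.
From Stdlib Require Import FunctionalExtensionality.

Import Order.TTheory GRing.Theory Num.Theory.

Section Infra.
Variable F : fclass.
Hypothesis HF : standard_conditions F.

Definition G (u : nat -> nat) := F 1%N (Defs.un u).

Lemma G_ext u v : (forall x, u x = v x) -> G u -> G v.
Proof. by move=> e; rewrite /G (functional_extensionality u v e). Qed.

Lemma tuple1_eta (t : 1.-tuple nat) : t = [tuple tnth t ord0].
Proof.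
apply: eq_from_tnth => i; rewrite (ord1 i) /=.
by rewrite [in RHS](tnth_nth 0) /=.
Qed.

Lemma G_of f : F 1 f -> G (ev1 f).
Proof.
move=> H; rewrite /G; suff -> : un (ev1 f) = f by [].
apply: functional_extensionality => t.
by rewrite /un /ev1 [in RHS](tuple1_eta t).
Qed.

Lemma G_id : G id.
Proof. by case: HF => _ _ Hp _ _; exact: (Hp 1 ord0). Qed.

Lemma G_comp u k : G u -> G k -> G (fun x => u (k x)).
Proof.
case: HF => _ _ _ _ Hc Hu Hk.
have := Hc 1 1 (un u) (fun _ => un k) Hu (fun _ => Hk).
rewrite /G; suff -> : fcomp (un u) (fun _ : 'I_1 => un k) = un (fun x => u (k x)) by [].
apply: functional_extensionality => t.
by rewrite /fcomp /un tnth_mktuple.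
Qed.

Lemma G_bin op u v : F 2 (bin op) -> G u -> G v -> G (fun x => op (u x) (v x)).
Proof.
case: HF => _ _ _ _ Hc Hop Hu Hv.
pose g := fun i : 'I_2 => if val i == 0 then un u else un v.
have := Hc 2 1 (bin op) g Hop.
have Hg : forall i, F 1 (g i) by move=> i; rewrite /g; case: ifP.
move=> /(_ Hg).
rewrite /G; suff -> : fcomp (bin op) g = un (fun x => op (u x) (v x)) by [].
apply: functional_extensionality => t.
by rewrite /fcomp /bin /un !tnth_mktuple /g.
Qed.

Lemma G_add u v : G u -> G v -> G (fun x => u x + v x)%N.
Proof. by case: HF => _ _ _ [Ha _ _] _; exact: G_bin. Qed.
Lemma G_mul u v : G u -> G v -> G (fun x => u x * v x)%N.
Proof. by case: HF => _ _ _ [_ Ha _] _; exact: G_bin. Qed.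
Lemma G_sub u v : G u -> G v -> G (fun x => u x - v x)%N.
Proof. by case: HF => _ _ _ [_ _ Ha] _; exact: G_bin. Qed.
Lemma G_S : G S.
Proof. by case: HF. Qed.
Lemma G_const n : G (fun _ => n).
Proof.
elim: n => [|n IH]; first by case: HF.
by have := G_comp _ _ G_S IH.
Qed.
Lemma G_succ u : G u -> G (fun x => (u x).+1).
Proof. by move=> H; exact: (G_comp _ _ G_S H). Qed.

Local Open Scope ring_scope.
Variable R : realType.

Definition Sq (u v w : nat -> nat) (x : nat) : R :=
  ((u x)%:R - (v x)%:R) / (w x).+1%:R.

Definition CR (a : R) := exists u v w, [/\ G u, G v, G w &
  forall x, `|Sq u v w x - a| <= (x.+1%:R)^-1].

Lemma CR_iff a : F_computable F a <-> CR a.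
Proof.
split.
  case=> f [g [h [Hf Hg Hh Hx]]].
  exists (ev1 f), (ev1 g), (ev1 h); split; try exact: G_of.
  exact: Hx.
case=> u [v [w [Hu Hv Hw Hx]]].
by exists (un u), (un v), (un w); split.
Qed.

Lemma npos (n : nat) : 0 < n.+1%:R :> R.
Proof. by rewrite ltr0Sn. Qed.

Lemma alg_sub (a b c a' b' c' : nat) :
  (((a*c'.+1 + b'*c.+1)%N%:R - (b*c'.+1 + a'*c.+1)%N%:R) / (c*c' + c + c')%N.+1%:R : R)
  = (a%:R - b%:R)/c.+1%:R - (a'%:R - b'%:R)/c'.+1%:R.
Proof.
have -> : ((c*c' + c + c').+1 = c.+1 * c'.+1)%N by lia.
rewrite !natrD !natrM.
have h1 : (0:R) <= c%:R := ler0n _ _; have h2 : (0:R) <= c'%:R := ler0n _ _.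
field; apply/andP; split; apply: lt0r_neq0; lra.
Qed.

Lemma alg_mul (a b c a' b' c' : nat) :
  (((a*a' + b*b')%N%:R - (a*b' + b*a')%N%:R) / (c*c' + c + c')%N.+1%:R : R)
  = ((a%:R - b%:R)/c.+1%:R) * ((a'%:R - b'%:R)/c'.+1%:R).
Proof.
have -> : ((c*c' + c + c').+1 = c.+1 * c'.+1)%N by lia.
rewrite !natrD !natrM.
have h1 : (0:R) <= c%:R := ler0n _ _; have h2 : (0:R) <= c'%:R := ler0n _ _.
field; apply/andP; split; apply: lt0r_neq0; lra.
Qed.

Lemma CR_sub a b : CR a -> CR b -> CR (a - b).
Proof.
case=> u [v [w [Hu Hv Hw Ha]]]; case=> u' [v' [w' [Hu' Hv' Hw' Hb]]].
pose k x := (x + x).+1%N.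
have Gk : G k by apply: G_succ; apply: G_add; exact: G_id.
exists (fun x => u (k x) * (w' (k x)).+1 + v' (k x) * (w (k x)).+1)%N.
exists (fun x => v (k x) * (w' (k x)).+1 + u' (k x) * (w (k x)).+1)%N.
exists (fun x => w (k x) * w' (k x) + w (k x) + w' (k x))%N.
split.
- apply: (G_comp (fun y => u y * (w' y).+1 + v' y * (w y).+1)%N) => //.
  by apply: G_add; apply: G_mul => //; apply: G_succ.
- apply: (G_comp (fun y => v y * (w' y).+1 + u' y * (w y).+1)%N) => //.
  by apply: G_add; apply: G_mul => //; apply: G_succ.
- apply: (G_comp (fun y => w y * w' y + w y + w' y)%N) => //.
  by apply: G_add; [apply: G_add => //; apply: G_mul|].
move=> x; rewrite /Sq alg_sub.
move: (Ha (k x)) (Hb (k x)); rewrite /Sq.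
set P := ((u (k x))%:R - _) / _.
set Q := ((u' (k x))%:R - _) / _.
move=> hA hB.
have e : (k x).+1%:R = 2 * x.+1%:R :> R.
  by rewrite -natrM; congr (_%:R); rewrite /k; lia.
have -> : P - Q - (a - b) = (P - a) + - (Q - b) by ring.
apply: le_trans (ler_normD _ _) _; rewrite normrN.
rewrite e invfM in hA hB; set y := x.+1%:R^-1 in hA hB *; lra.
Qed.

Lemma bound_nat (r : R) : exists n : nat, r <= n%:R.
Proof.
case: (lerP 0 r) => hr.
  by exists (Num.Def.archi_bound r); apply/ltW/archi_boundP.
by exists 0%N; rewrite ltW.
Qed.

Lemma CR_mul a b : CR a -> CR b -> CR (a * b).
Proof.
case=> u [v [w [Hu Hv Hw Ha]]]; case=> u' [v' [w' [Hu' Hv' Hw' Hb]]].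
have [d hd] := bound_nat (`|a| + `|b|).
pose k x := (d.+1 * x + d)%N.
have Gk : G k := G_add _ _ (G_mul _ _ (G_const d.+1) G_id) (G_const d).
exists (fun x => u (k x) * u' (k x) + v (k x) * v' (k x))%N.
exists (fun x => u (k x) * v' (k x) + v (k x) * u' (k x))%N.
exists (fun x => w (k x) * w' (k x) + w (k x) + w' (k x))%N.
split.
- apply: (G_comp (fun y => u y * u' y + v y * v' y)%N) => //.
  by apply: G_add; apply: G_mul.
- apply: (G_comp (fun y => u y * v' y + v y * u' y)%N) => //.
  by apply: G_add; apply: G_mul.
- apply: (G_comp (fun y => w y * w' y + w y + w' y)%N) => //.
  by apply: G_add; [apply: G_add => //; apply: G_mul|].
move=> x; rewrite /Sq alg_mul.
move: (Ha (k x)) (Hb (k x)); rewrite /Sq.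
set P := ((u (k x))%:R - _) / _.
set Q := ((u' (k x))%:R - _) / _.
move=> hA hB.
set e := ((k x).+1%:R)^-1 in hA hB.
set y := x.+1%:R^-1.
have he0 : 0 <= e by rewrite invr_ge0 ler0n.
have E : d.+1%:R * e = y.
  rewrite /e /y (_ : (k x).+1 = d.+1 * x.+1)%N; last by rewrite /k; lia.
  rewrite natrM invfM mulrA divff ?mul1r //.
  exact: lt0r_neq0 (npos d).
have he1 : e <= 1.
  rewrite /e invr_le1 ?npos // ?unitfE ?(lt0r_neq0 (npos _)) //.
  by rewrite ler1n.
have -> : P * Q - a * b = P * (Q - b) + b * (P - a) by ring.
apply: le_trans (ler_normD _ _) _; rewrite (normrM P) (normrM b).
have hP : `|P| <= `|a| + 1.
  have := ler_normD (P - a) a; rewrite subrK; lra.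
have h1 : `|P| * `|Q - b| <= (`|a| + 1) * e.
  by apply: ler_pM => //; apply: normr_ge0.
have h2 : `|b| * `|P - a| <= `|b| * e.
  by apply: ler_wpM2l => //; apply: normr_ge0.
have h3 : (`|a| + `|b| + 1) * e <= d.+1%:R * e.
  by apply: ler_wpM2r => //; rewrite -natr1; lra.
lra.
Qed.

Lemma CR_inv_pos a : 0 < a -> CR a -> CR a^-1.
Proof.
move=> a0; case=> u [v [w [Hu Hv Hw Ha]]].
have [K hK] := bound_nat (2 / a).
have [d hd] := bound_nat (2 / (a * a)).
pose k x := (d.+1 * x + d + K)%N.
have Gk : G k := G_add _ _ (G_add _ _ (G_mul _ _ (G_const d.+1) G_id) (G_const d)) (G_const K).
exists (fun x => (w (k x)).+1).
exists (fun _ => 0%N).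
exists (fun x => u (k x) - v (k x) - 1)%N.
split.
- exact: (G_comp _ _ (G_succ _ Hw) Gk).
- exact: G_const.
- apply: (G_comp (fun y => u y - v y - 1)%N) => //.
  by apply: G_sub; [apply: G_sub|apply: G_const].
move=> x.
move: (Ha (k x)); rewrite /Sq.
set P := ((u (k x))%:R - _) / _.
move=> hA.
set e := ((k x).+1%:R)^-1 in hA.
set y := x.+1%:R^-1.
set D := d.+1%:R : R; set X := x.+1%:R : R; set K1 := K.+1%:R : R.
have he0 : 0 <= e by rewrite invr_ge0 ler0n.
have X0 : 0 < X by exact: npos.
have D0 : 0 < D by exact: npos.
have K0 : 0 < K1 by exact: npos.
have hkx : (k x).+1%:R = D * X + K%:R :> R.
  by rewrite /D /X -natrM -natrD; congr (_%:R); rewrite /k; lia.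
have eE : e * (D * X + K%:R) = 1.
  by rewrite /e hkx mulVf // lt0r_neq0 // -hkx npos.
have hK1 : K1 = K%:R + 1 by rewrite /K1 -natr1.
have hKa : 2 <= a * K1.
  by rewrite -ler_pdivrMl // hK1; lra.
have hDa : 2 <= a * a * D.
  have aa : 0 < a * a by apply: mulr_gt0.
  rewrite -ler_pdivrMl // /D -natr1; lra.
have hyX : y * X = 1 by rewrite /y mulVf // lt0r_neq0.
have y0 : 0 <= y by rewrite invr_ge0 ler0n.
have eDX : 0 <= e * D * X by rewrite !mulr_ge0 // ltW.
have eK : 0 <= e * K%:R by rewrite mulr_ge0 // ler0n.
have h2e : 2 * e <= a.
  have : 2 * e <= a * K1 * e by apply: ler_wpM2r.
  have : a * (e * K1) <= a * 1.
    apply: ler_wpM2l; first exact: ltW.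
    have DX1 : 1 <= D * X.
      have h1 : 1 <= D by rewrite /D ler1n.
      have h2 : 1 <= X by rewrite /X ler1n.
      have := ler_pM ler01 ler01 h1 h2; rewrite mul1r; done.
    have : e * 1 <= e * (D * X) by apply: ler_wpM2l.
    rewrite hK1; lra.
  lra.
have hP : a / 2 <= P.
  have := ler_norm (a - P); rewrite distrC; lra.
have P0 : 0 < P by lra.
have heD : e * D <= y.
  have eDX1 : e * D * X <= 1 by lra.
  have : e * D * X * y <= 1 * y by apply: ler_wpM2r.
  by rewrite -mulrA (mulrC X) hyX mulr1 mul1r.
have hey : 2 * e <= a * a * y.
  have : 2 * e <= a * a * D * e by apply: ler_wpM2r.
  have : a * a * (e * D) <= a * a * y by apply: ler_wpM2l; [exact: ltW (mulr_gt0 a0 a0)|].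
  lra.
have hvu : (v (k x) < u (k x))%N.
  rewrite -(ltr_nat R) -subr_gt0.
  have := mulr_gt0 P0 (npos (w (k x))).
  by rewrite /P divfK // lt0r_neq0 // npos.
rewrite (_ : ((w (k x)).+1%:R - 0) / (u (k x) - v (k x) - 1)%N.+1%:R = P^-1); last first.
  rewrite /P invf_div subr0.
  rewrite subn1 prednK ?subn_gt0 //.
  by rewrite natrB // ltnW.
have -> : P^-1 - a^-1 = (a - P) / (P * a).
  field; apply/andP; split; exact: lt0r_neq0.
have Pa : 0 < P * a by apply: mulr_gt0.
rewrite normrM (_ : `|(P * a)^-1| = (P * a)^-1); last by rewrite ger0_norm // invr_ge0 ltW.
rewrite ler_pdivrMr //.
have : y * (a * a) <= 2 * y * (P * a).
  have : a * a <= 2 * (P * a).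
    have : a * a <= 2 * P * a by apply: ler_wpM2r; [exact: ltW| lra].
    by rewrite mulrA.
  move=> h; have := ler_wpM2l y0 h; lra.
rewrite distrC in hA.
lra.
Qed.

Lemma CR_0 : CR 0.
Proof.
exists (fun _ => 0%N), (fun _ => 0%N), (fun _ => 0%N); split; try exact: G_const.
by move=> x; rewrite /Sq subrr mul0r subrr normr0 invr_ge0 ler0n.
Qed.

Lemma CR_1 : CR 1.
Proof.
exists (fun _ => 1%N), (fun _ => 0%N), (fun _ => 0%N); split; try exact: G_const.
by move=> x; rewrite /Sq subr0 divr1 subrr normr0 invr_ge0 ler0n.
Qed.

Lemma CR_inv a : CR a -> a != 0 -> CR a^-1.
Proof.
move=> Ha a0; case: (ltrgt0P a) a0 => // [ap|an] _; first exact: CR_inv_pos.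
have H1 : CR (0 - a) by apply: CR_sub => //; exact: CR_0.
have H2 : CR (0 - a)^-1 by apply: CR_inv_pos => //; rewrite sub0r oppr_gt0.
have := CR_sub _ _ CR_0 H2.
by rewrite !sub0r invrN opprK.
Qed.
End Infra.

Theorem mainTheorem12 (F : fclass) (R : realType) :
  standard_conditions F -> is_subfield (F_computable F (R := R)).
Proof.
move=> HF.
have E := @CR_iff F R.
split.
- by apply/E; exact: (@CR_0 F HF R).
- by apply/E; exact: (@CR_1 F HF R).
- by move=> a b /E Ha /E Hb; apply/E; exact: (@CR_sub F HF R _ _ Ha Hb).
- by move=> a b /E Ha /E Hb; apply/E; exact: (@CR_mul F HF R _ _ Ha Hb).
- by move=> a /E Ha a0; apply/E; exact: (@CR_inv F HF R _ Ha a0).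
Qed.
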